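(* Let $m>2$ be an even integer, $n\ge 1$ an integer, and let $M_{2mn}=\langle a,b : a^m=b^{2n}=1,\ bab^{-1}=a^{-1}\rangle$ be the metacyclic group of order $2mn$. Let $\Gamma_{M_{2mn}}$ be its non-commuting graph. Then the spectrum of the distance matrix $D(\Gamma_{M_{2mn}})$ (eigenvalues counted with multiplicity, multiplicities being added if two of the listed values coincide) consists of: (a) $-2$ with multiplicity $2n(m-1)-\frac{m}{2}-1$; (b) $2n-2$ with multiplicity $\frac{m}{2}-1$; (c) $\frac{-(2n-3mn+4)+n\sqrt{5m^2-20m+36}}{2}$ and $\frac{-(2n-3mn+4)-n\sqrt{5m^2-20m+36}}{2}$, each with multiplicity $1$.
   Context: For a finite non-abelian group $G$ with centre $Z(G)$, the non-commuting graph $\Gamma_G$ is the simple undirected graph with vertex set $G\setminus Z(G)$, in which two distinct vertices $u,v$ are adjacent if and only if $uv\ne vu$. For a connected graph $H$, $d_{uv}$ denotes the length of a shortest path between vertices $u$ and $v$, and the distance matrix $D(H)$ is the matrix whose $(u,v)$-entry is $d_{uv}$. *)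

(* Defs.v *)
From HB Require Import structures.
From mathcomp Require Import all_boot all_order all_algebra all_fingroup all_solvable.
Set Implicit Arguments. Unset Strict Implicit. Unset Printing Implicit Defensive.
Import GRing.Theory Num.Theory.

Definition nc_adj (gT : finGroupType) (V : {set gT}) : rel gT :=
  fun x y => [&& x \in V, y \in V & (x * y != y * x)%g].

Fixpoint walk (T : finType) (e : rel T) (k : nat) (x y : T) : bool :=
  match k with
  | 0 => x == y
  | k'.+1 => [exists z, e x z && walk e k' z y]
  end.

(* Shortest-path distance: least k with a walk of length k from x to y
   (every shortest walk has length < #|T|; for disconnected pairs the junk
   value #|T| is returned, which never arises for connected graphs). *)
Definition gdist (T : finType) (e : rel T) (x y : T) : nat :=
  find (fun k => walk e k x y) (iota 0 #|T|).

Definition nc_dist (gT : finGroupType) (G : {group gT}) : gT -> gT -> nat :=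
  gdist (nc_adj (G :\: 'Z(G))%g).

Definition nc_dist_matrix (R : nzRingType) (gT : finGroupType) (G : {group gT})
  : 'M[R]_#|(G :\: 'Z(G))%g| :=
  \matrix_(i, j) ((nc_dist G (enum_val i) (enum_val j))%:R : R)%R.

(* Main.v *)
Require Import Defs.
From HB Require Import structures.
From mathcomp Require Import all_boot all_order all_algebra all_fingroup all_solvable.
From mathcomp Require Import zify ring.
Import GRing.Theory Num.Theory.

Lemma card_sum M (P : pred nat) : #|[set i : 'I_M | P i]| = (\sum_(0 <= i < M) P i)%N.
Proof.
rewrite -sum1_card big_mkcond /= big_mkord; apply: eq_bigr => i _.
by rewrite inE; case: (P i).
Qed.

Lemma cnt_odd n : #|[set j : 'I_(2 * n) | odd j]| = n.
Proof.
rewrite (card_sum _ odd); elim: n => [|n IH]; first by rewrite big_geq.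
by rewrite mulnS !big_nat_recr //= -/(2 * n) IH oddM /= addn0 addn1.
Qed.

Lemma cnt_even n : #|[set j : 'I_(2 * n) | ~~ odd j]| = n.
Proof.
rewrite (card_sum _ (fun j => ~~ odd j)); elim: n => [|n IH]; first by rewrite big_geq.
by rewrite mulnS !big_nat_recr //= -/(2 * n) IH oddM /= addn0 addn1.
Qed.

Lemma sum_eq1 h r : (r < h)%N -> (\sum_(0 <= i < h) (i == r))%N = 1%N.
Proof.
move=> rh; rewrite big_mkord (bigD1 (Ordinal rh)) //= eqxx big1 // => i /eqP ne.
by case: eqP => // e; case: ne; apply: val_inj.
Qed.

Lemma cnt_mod h r : (r < h)%N -> #|[set i : 'I_(h.*2) | i %% h == r]| = 2.
Proof.
move=> rh; rewrite (card_sum _ (fun i => i %% h == r)) -addnn.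
rewrite (@big_cat_nat _ _ _ h) ?leq_addr //=.
rewrite -{3}[h]add0n big_addn addnK.
rewrite (eq_big_nat _ _ (F2 := fun i => nat_of_bool (i == r))); last first.
  by move=> i /andP[_ ih]; rewrite modn_small.
rewrite [X in (_ + X)%N](eq_big_nat _ _ (F2 := fun i => nat_of_bool (i == r))); last first.
  by move=> i /andP[_ ih]; rewrite modnDr modn_small.
by rewrite sum_eq1.
Qed.

Lemma cnt_modC h : (0 < h)%N -> #|[set i : 'I_(h.*2) | i %% h != 0]| = (h.*2 - 2)%N.
Proof.
move=> h0.
have := cardsC [set i : 'I_(h.*2) | i %% h == 0].
rewrite cnt_mod // card_ord => e.
have e' := congr1 (fun x => x - 2)%N e; rewrite /= addKn in e'.
by rewrite -e'; apply: eq_card => i; rewrite !inE.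
Qed.

Definition sg m j k := if odd j then (k * (m - 1))%N else k.

Lemma mod2 h x y : (0 < h)%N -> (x.*2 == y.*2 %[mod h.*2]) = (x == y %[mod h]).
Proof.
move=> h0; rewrite -!muln2 -!muln_modl eqn_mul2r //.
Qed.

Lemma comm_arith h i j k l : (0 < h)%N ->
  (i + sg (h.*2) j k == k + sg (h.*2) l i %[mod h.*2]) =
  if odd j then (if odd l then i %% h == k %% h else k %% h == 0)
  else (if odd l then i %% h == 0 else true).
Proof.
move=> h0; rewrite /sg.
have [m1 hm1] : exists m1, h.*2 = m1.+1 by exists (h.*2).-1; rewrite prednK // double_gt0.
rewrite hm1 subn1 /=.
case: (odd j); case: (odd l).
- rewrite -(eqn_modDr (i + k)).
  have -> : (i + k * m1 + (i + k) = k * m1.+1 + i.*2)%N by rewrite -addnn; nia.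
  have -> : (k + i * m1 + (i + k) = i * m1.+1 + k.*2)%N by rewrite -addnn; nia.
  by rewrite !modnMDl -hm1 mod2.
- rewrite -(eqn_modDr k).
  have -> : (i + k * m1 + k = i + k * m1.+1)%N by nia.
  have -> : (k + i + k = i + k.*2)%N by rewrite -addnn; nia.
  rewrite eqn_modDl -[k * m1.+1]addn0 modnMDl -hm1 -(double0) mod2 //.
  by rewrite eq_sym mod0n.
- rewrite -(eqn_modDr i).
  have -> : (k + i * m1 + i = k + i * m1.+1)%N by nia.
  have -> : (i + k + i = k + i.*2)%N by rewrite -addnn; nia.
  rewrite eqn_modDl -[i * m1.+1]addn0 modnMDl -hm1 -(double0) mod2 //.
  by rewrite mod0n.
- by rewrite addnC eqxx.
Qed.

Section GroupPart.
Local Open Scope group_scope.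



Lemma rel1 {gT : finGroupType} {a b : gT} : b * a * b^-1 = a^-1 -> b * a = a^-1 * b.
Proof. by move=> e; rewrite -e mulgKV. Qed.

Lemma rel_inv {gT : finGroupType} {a b : gT} : b * a = a^-1 * b -> b * a^-1 = a * b.
Proof. by move=> e; apply: (mulgI a^-1); rewrite mulKg mulgA -e mulgK. Qed.

Lemma bak {gT : finGroupType} {a b : gT} k : b * a = a^-1 * b -> b * a ^+ k = (a^-1) ^+ k * b.
Proof.
move=> e; elim: k => [|k IH]; first by rewrite !expg0 mul1g mulg1.
by rewrite !expgS mulgA e -mulgA IH mulgA.
Qed.

Lemma b2comm {gT : finGroupType} {a b : gT} : b * a = a^-1 * b -> commute (b ^+ 2) a.
Proof.
move=> e; rewrite /commute expgS expg1 -mulgA e mulgA (rel_inv e) -mulgA.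
by [].
Qed.

Lemma ainv {gT : finGroupType} {a : gT} m : a ^+ m = 1 -> (0 < m)%N -> a^-1 = a ^+ (m - 1).
Proof. by move=> am m0; apply/eqP; rewrite eq_invg_mul -expgS subn1 prednK ?am. Qed.

Lemma bja {gT : finGroupType} {a b : gT} m j k : a ^+ m = 1 -> (0 < m)%N ->
  b * a = a^-1 * b -> b ^+ j * a ^+ k = a ^+ (sg m j k) * b ^+ j.
Proof.
move=> am m0 e.
have -> : b ^+ j = b ^+ (odd j) * (b ^+ 2) ^+ j./2.
  by rewrite -expgM -expgD mul2n odd_double_half.
have c := commuteX2 j./2 k (b2comm e).
rewrite -mulgA c mulgA /sg; case: (odd j) => /=.
  by rewrite expg1 (bak _ e) (ainv _ am m0) -expgM mulnC mulgA.
by rewrite expg0 !mul1g.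
Qed.

Lemma prodf {gT : finGroupType} {a b : gT} m i j k l : a ^+ m = 1 -> (0 < m)%N ->
  b * a = a^-1 * b ->
  (a ^+ i * b ^+ j) * (a ^+ k * b ^+ l) = a ^+ (i + sg m j k) * b ^+ (j + l).
Proof.
move=> am m0 e.
by rewrite mulgA -(mulgA (a ^+ i)) (bja _ _ _ am m0 e) mulgA -expgD -mulgA -expgD.
Qed.

End GroupPart.

Lemma walk1 (T : finType) (e : rel T) x y : walk e 1 x y = e x y.
Proof.
apply/existsP/idP => [[z /andP[exz /eqP <-]] // | exy].
by exists y; rewrite exy eqxx.
Qed.

Lemma gdist_eq (T : finType) (e : rel T) x y : (2 < #|T|)%N ->
  gdist e x y = if x == y then 0%N else if e x y then 1%N
                else if walk e 2 x y then 2%N else (find (fun k => walk e k x y) (iota 3 (#|T| - 3))).+3.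
Proof.
move=> T3; rewrite /gdist; set k := (#|T| - 3)%N.
have -> : #|T| = k.+3 by rewrite /k; lia.
rewrite -(@walk1 _ e x y) /=.
by case: ifP => // _; case: ifP => // _; case: ifP.
Qed.

Lemma gd0 (T : finType) (e : rel T) x : (2 < #|T|)%N -> gdist e x x = 0%N.
Proof. by move=> T3; rewrite gdist_eq // eqxx. Qed.

Lemma gd1 (T : finType) (e : rel T) x y : (2 < #|T|)%N -> x != y -> e x y -> gdist e x y = 1%N.
Proof. by move=> T3 /negbTE xy exy; rewrite gdist_eq // xy exy. Qed.

Lemma gd2 (T : finType) (e : rel T) x y z : (2 < #|T|)%N -> x != y -> ~~ e x y ->
  e x z -> e z y -> gdist e x y = 2%N.
Proof.
move=> T3 /negbTE xy /negbTE exy exz ezy; rewrite gdist_eq // xy exy.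
suff -> : walk e 2 x y by [].
apply/existsP; exists z; rewrite exz /=; apply/existsP; exists y; by rewrite ezy eqxx.
Qed.

Local Open Scope ring_scope.

Lemma det2 (R : comNzRingType) (M : 'M[R]_2) : \det M = M 0 0 * M 1 1 - M 0 1 * M 1 0.
Proof.
rewrite (expand_det_row _ 0) !big_ord_recl big_ord0 /cofactor !det_mx11 !mxE /=.
rewrite /= !(expr0, expr1, mul1r, addr0, mulN1r, mulrN).
by congr (_ * _ - _ * _); congr (M _ _); apply/val_inj.
Qed.

Lemma sum_pick (R : nzSemiRingType) k (t0 : 'I_k) (g : 'I_k -> R) :
  \sum_t (t0 == t)%:R * g t = g t0.
Proof.
rewrite (bigD1 t0) //= eqxx mul1r big1 ?addr0 // => t /negbTE ne.
by rewrite eq_sym ne mul0r.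
Qed.

Lemma sylv (R : comNzRingType) N k (A : 'M[R]_(N,k)) (B : 'M[R]_(k,N)) (s : R) :
  s ^+ N * \det (s%:M - B *m A) = s ^+ k * \det (s%:M - A *m B).
Proof.
pose X := block_mx 1%:M A B (s%:M).
have h1 : \det X = \det (s%:M - B *m A).
  have := det_mulmx (block_mx 1%:M 0 (-B) 1%:M) X.
  rewrite mulmx_block det_lblock !det1 mul1r !mul1mx !mul0mx !addr0 mulNmx.
  rewrite mulmx1 addNr mul1r => h; rewrite -h.
  by rewrite det_ublock det1 mul1r mulNmx addrC.
have h2 : s ^+ N * \det X = s ^+ k * \det (s%:M - A *m B).
  have := det_mulmx (block_mx (s%:M) (-A) 0 1%:M) X.
  rewrite det_ublock det_scalar det1 mulr1 => <-.
  rewrite mulmx_block !mul0mx !mul1mx !add0r !mulNmx mulmx1.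
  by rewrite mul_scalar_mx mul_mx_scalar subrr det_lblock det_scalar mulrC.
by rewrite -h1.
Qed.

Lemma sylv_cancel (R : idomainType) N k (A : 'M[R]_(N,k)) (B : 'M[R]_(k,N)) (s : R) :
  s != 0 -> (k <= N)%N ->
  \det (s%:M - A *m B) = s ^+ (N - k) * \det (s%:M - B *m A).
Proof.
move=> s0 kN; have := @sylv _ _ _ A B s.
have -> : s ^+ N = s ^+ k * s ^+ (N - k) by rewrite -exprD subnKC.
by rewrite -mulrA => /(mulfI (expf_neq0 k s0)).
Qed.

Lemma multipartite (R : idomainType) N h (f : 'I_N -> 'I_h.+1) (P0 q : nat)
  (D : 'M[R]_N) :
  (1 <= h)%N -> (h.+1 <= N)%N ->
  (forall t, #|[set i | f i == t]| = if t == ord0 then P0 else q) ->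
  (forall i j, D i j = (if i == j then 0 else if f i == f j then 2 else 1)%:R) ->
  char_poly D = ('X + 2%:P) ^+ (N - h.+1) * ('X + 2%:P - q%:R) ^+ (h - 1) *
     (('X + 2%:P - P0%:R) * ('X + 2%:P - q%:R - N%:R) - (P0%:R - q%:R) * P0%:R).
Proof.
move=> h1 hN cardf Dij.
pose p (t : 'I_h.+1) := if t == ord0 then P0 else q.
set s : {poly R} := 'X + 2%:P.
have s0 : s != 0.
  by rewrite /s -size_poly_eq0 size_XaddC.
pose U : 'M[{poly R}]_(N, h.+1) := \matrix_(i, t) (f i == t)%:R.
pose C : 'M[{poly R}]_(h.+1) := \matrix_(t, t') (1 + (t == t')%:R).
have E1 : char_poly_mx D = s%:M - U *m (C *m U^T).
  apply/matrixP => i j.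
  have -> : (U *m (C *m U^T)) = \matrix_(i, j) (1 + (f i == f j)%:R).
    apply/matrixP => {}i {}j; rewrite [RHS]mxE.
    rewrite !mxE; under eq_bigr => t _ do rewrite !mxE.
    rewrite sum_pick; under eq_bigr => t _ do rewrite !mxE.
    rewrite (eq_bigr (fun t => (f j == t)%:R * (1 + (f i == t)%:R))); last first.
      by move=> t _; rewrite mulrC eq_sym.
    by rewrite sum_pick eq_sym.
  rewrite !mxE.
  rewrite Dij /s; case: (i =P j) => [->|ne]; first by rewrite eqxx /= !polyC_natr mulr1n; ring.
  by case: (f i == f j); rewrite !mulr0n polyC_natr /=; ring.
have sumN : (\sum_t p t = N)%N.
  rewrite /p; under eq_bigr => t _ do rewrite -cardf.
  rewrite -[N in RHS]card_ord -sum1_card (partition_big f xpredT) //=.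
  by apply: eq_bigr => t _; rewrite -sum1_card; apply: eq_bigl => i; rewrite inE.
have cardR t : (\sum_i (f i == t)%:R : {poly R}) = (p t)%:R.
  rewrite /p -cardf -sum1_card natr_sum big_mkcond /=.
  by rewrite [RHS]big_mkcond; apply: eq_bigr => i _; rewrite inE; case: (f i == t).
rewrite /char_poly E1 (@sylv_cancel _ _ _ U (C *m U^T) s s0 hN).
have E2 : (C *m U^T) *m U = \matrix_(t, t') ((1 + (t == t')%:R) * (p t')%:R).
  apply/matrixP => t t'; rewrite !mxE.
  under eq_bigr => i _ do rewrite !mxE.
  under eq_bigr => i _ do under eq_bigr => u _ do rewrite !mxE mulrC.
  under eq_bigr => i _ do rewrite sum_pick.
  rewrite (eq_bigr (fun i => (f i == t')%:R * (1 + (t == t')%:R))); last first.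
    by move=> i _; case: (f i =P t') => [->|_]; rewrite ?eqxx ?mulr1 ?mul1r ?mulr0 ?mul0r.
  by rewrite -mulr_suml cardR mulrC.
rewrite E2.
pose X : 'M[{poly R}]_(h.+1, 2) := \matrix_(t, u) (if u == 0 then (t == ord0)%:R else 1).
pose Y : 'M[{poly R}]_(2, h.+1) :=
  \matrix_(u, t) (if u == 0 then (t == ord0)%:R * (P0%:R - q%:R) else (p t)%:R).
have E3 : s%:M - \matrix_(t, t') ((1 + (t == t')%:R) * (p t')%:R) = (s - q%:R)%:M - X *m Y.
  apply/matrixP => t t'; rewrite !mxE !big_ord_recl big_ord0 !mxE /= /p.
  case: (t =P t') => [<-|ne].
    by rewrite ?eqxx /= ?mulr1n; case: (t == ord0) => /=; ring.
  rewrite /= mulr0n.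
  case: (t =P ord0) => [et|_]; case: (t' =P ord0) => [et'|_] /=; try ring.
  by case: ne; rewrite et et'.
have hk : (2 <= h.+1)%N by [].
rewrite E3 (@sylv_cancel _ _ _ X Y _ _ hk); last first.
  by rewrite /s -addrA -polyC_natr -polyCB -size_poly_eq0 size_XaddC.
rewrite det2 !mxE /=.
have pk (g : 'I_h.+1 -> {poly R}) : \sum_j (j == ord0)%:R * g j = g ord0.
  by rewrite -[RHS](@sum_pick _ _ ord0 g); apply: eq_bigr => j _; rewrite eq_sym.
have S00 : \sum_j Y 0 j * X j 0 = P0%:R - q%:R.
  rewrite -(pk (fun=> P0%:R - q%:R)); apply: eq_bigr => j _.
  by rewrite !mxE /=; case: (j == ord0); rewrite /= ?mul0r ?mulr1 ?mul1r.
have S01 : \sum_j Y 0 j * X j 1 = P0%:R - q%:R.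
  rewrite -(pk (fun=> P0%:R - q%:R)); apply: eq_bigr => j _.
  by rewrite !mxE /= mulr1.
have S10 : \sum_j Y 1 j * X j 0 = P0%:R.
  rewrite -(pk (fun j => (p j)%:R)); apply: eq_bigr => j _.
  by rewrite !mxE /= mulrC.
have S11 : \sum_j Y 1 j * X j 1 = N%:R.
  rewrite -sumN natr_sum; apply: eq_bigr => j _.
  by rewrite !mxE /= mulr1.
rewrite S00 S01 S10 S11 subn2 /= mulr1n mulr0n.
by rewrite subn1; ring.
Qed.

Lemma part_sum N h (f : 'I_N -> 'I_h.+1) (P0 q : nat) :
  (forall t, #|[set i | f i == t]| = if t == ord0 then P0 else q) ->
  N = (P0 + h * q)%N.
Proof.
move=> cardf.
rewrite -[N in LHS]card_ord -sum1_card (partition_big f xpredT) //=.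
rewrite (eq_bigr (fun t => if t == ord0 then P0 else q)); last first.
  by move=> t _; rewrite -cardf -sum1_card; apply: eq_bigl => i; rewrite inE.
rewrite big_ord_recl eqxx /=.
rewrite (eq_bigr (fun _ => q)); last first.
  by [].
by rewrite sum_nat_const card_ord.
Qed.


Theorem theorem6p2 (R : rcfType) (m n : nat) (gT : finGroupType)
  (G : {group gT}) (a b : gT) :
  (2 < m)%N -> ~~ odd m -> (1 <= n)%N ->
  G :=: <<[set a; b]>>%g ->
  (a ^+ m = 1)%g -> (b ^+ (2 * n) = 1)%g -> (b * a * b^-1 = a^-1)%g ->
  #|G| = (2 * m * n)%N ->
  char_poly (nc_dist_matrix R G) =
    ('X + 2%:P) ^+ (2 * n * (m - 1) - m./2 - 1)
    * ('X - (2 * n%:R - 2)%:P) ^+ (m./2 - 1)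
    * ('X - ((- (2 * n%:R - 3 * m%:R * n%:R + 4)
              + n%:R * Num.sqrt (5 * m%:R ^+ 2 - 20 * m%:R + 36)) / 2)%:P)
    * ('X - ((- (2 * n%:R - 3 * m%:R * n%:R + 4)
              - n%:R * Num.sqrt (5 * m%:R ^+ 2 - 20 * m%:R + 36)) / 2)%:P).
Proof.
move=> m2 modd n1 HG am b2n rel cardG.
have e := rel1 rel.
have [h hm] : exists h, m = h.*2.
  by exists m./2; rewrite -[m in LHS]odd_double_half (negbTE modd) add0n.
subst m.
have h2 : (2 <= h)%N by move: m2; rewrite -muln2; lia.
have h0 : (0 < h)%N by lia.
have m0 : (0 < h.*2)%N by rewrite double_gt0.
have n2 : (0 < 2 * n)%N by lia.
pose phi (p : 'I_(h.*2) * 'I_(2 * n)) := (a ^+ p.1 * b ^+ p.2)%g.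
have aG : a \in G by rewrite HG mem_gen // !inE eqxx.
have bG : b \in G by rewrite HG mem_gen // !inE eqxx orbT.
have phiG p : phi p \in G by rewrite groupM // groupX.
have Gphi x : x \in G -> exists p, x = phi p.
  move=> xG.
  have nab : <[b]>%g \subset 'N(<[a]>)%g.
    rewrite cycle_subG; apply/normP; rewrite -cycleJ.
    have -> : (a ^ b = a^-1)%g by rewrite conjgE -(rel_inv e) mulKg.
    by rewrite cycleV.
  have : x \in (<[a]> * <[b]>)%g.
    rewrite -norm_joinEr //; move: xG; rewrite HG; apply/subsetP; rewrite gen_subG.
    apply/subsetP => y; rewrite !inE => /orP[/eqP->|/eqP->].
      by apply: (subsetP (joing_subl _ _)); exact: cycle_id.
    by apply: (subsetP (joing_subr _ _)); exact: cycle_id.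
  case/mulsgP => y z /cycleP[i ->] /cycleP[j ->] ->.
  exists (Ordinal (ltn_pmod i m0), Ordinal (ltn_pmod j n2)).
  by rewrite /phi /= (expg_mod i am) (expg_mod j b2n).
have phi_inj : injective phi.
  have Gim : G :=: phi @: setT.
    apply/eqP; rewrite eqEsubset; apply/andP; split; apply/subsetP => x.
      by move/Gphi => [p ->]; rewrite imset_f ?inE.
    by case/imsetP => p _ ->; exact: phiG.
  have : #|phi @: setT| == #|[set: 'I_(h.*2) * 'I_(2 * n)]|.
    by rewrite -Gim cardG cardsT card_prod !card_ord mulnCA mulnA.
  by move/imset_injP => inj p q E; apply: inj; rewrite ?inE.
have amod u v : (a ^+ u == a ^+ v)%g = (u %% h.*2 == v %% h.*2)%N.
  apply/eqP/eqP => E.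
    have := @phi_inj (Ordinal (ltn_pmod u m0), Ordinal n2) (Ordinal (ltn_pmod v m0), Ordinal n2).
    rewrite /phi /= (expg_mod u am) (expg_mod v am) E => /(_ erefl).
    by move/(congr1 (fun p => val p.1)).
  by rewrite -(expg_mod u am) -(expg_mod v am) E.
have commP p q : (phi p * phi q == phi q * phi p)%g =
    (p.1 + sg (h.*2) p.2 q.1 == q.1 + sg (h.*2) q.2 p.1 %[mod h.*2])%N.
  rewrite /phi !(prodf _ _ _ _ _ am m0 e) (addnC q.2) (inj_eq (@mulIg _ _)).
  exact: amod.
pose cen (p : 'I_(h.*2) * 'I_(2 * n)) := ~~ odd p.2 && (p.1 %% h == 0)%N.
pose g (p : 'I_(h.*2) * 'I_(2 * n)) : 'I_h.+1 := if odd p.2 then inord (p.1 %% h).+1 else ord0.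
have inordS x : (x < h)%N -> (inord x.+1 == ord0 :> 'I_h.+1) = false.
  by move=> xh; rewrite -val_eqE /= inordK.
have comm_g p q : ~~ cen p -> ~~ cen q -> (phi p * phi q == phi q * phi p)%g = (g p == g q).
  rewrite commP comm_arith // /cen /g.
  case: p q => [i j] [k l] /=; case: (odd j); case: (odd l) => /=.
  - by move=> _ _; rewrite -val_eqE /= !inordK ?ltnS ?ltn_pmod.
  - by move=> _ /negbTE ->; rewrite inordS ?ltn_pmod.
  - by move=> /negbTE -> _; rewrite eq_sym inordS ?ltn_pmod.
  - by rewrite eqxx.
have h1m : (1 < h.*2)%N by lia.
have n12 : (1 < 2 * n)%N by lia.
have cenP p : (phi p \in 'Z(G)%g) = cen p.
  apply/centerP/idP.
    case=> _ cz; apply/negPn/negP => ncp.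
    case hj : (odd p.2).
      have /eqP := cz _ (phiG (Ordinal h1m, Ordinal n2)).
      by rewrite commP comm_arith // hj /= modn_small.
    have /eqP := cz _ (phiG (Ordinal m0, Ordinal n12)).
    rewrite commP comm_arith // hj /=.
    by move: ncp; rewrite /cen hj /= => /negbTE ->.
  move=> cp; split => //; move=> y /Gphi [q ->]; apply/eqP; rewrite commP comm_arith //.
  by move: cp; rewrite /cen; case/andP => /negbTE -> /eqP ->; case: ifP.
set V := (G :\: 'Z(G))%g.
have phiV p : (phi p \in V) = ~~ cen p by rewrite in_setD cenP phiG andbT.
have Vphi x : x \in V -> exists2 p, x = phi p & ~~ cen p.
  move=> xV; have := xV; rewrite in_setD => /andP[xZ xG]; have [p ep] := Gphi x xG; exists p => //; by rewrite -cenP -ep.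
pose f x : 'I_h.+1 := if [pick p | phi p == x] is Some p then g p else ord0.
have fphi p : f (phi p) = g p.
  rewrite /f; case: pickP => [q /eqP /phi_inj -> // | /(_ p)]; by rewrite eqxx.
have commV x y : x \in V -> y \in V -> (x * y == y * x)%g = (f x == f y).
  move=> /Vphi [p -> cp] /Vphi [q -> cq]; by rewrite !fphi comm_g.
have T3 : (2 < #|gT|)%N.
  have := max_card (mem G); rewrite cardG -muln2 => le.
  have : (8 <= 2 * (h * 2) * n)%N by move: h2 n1; clear; nia.
  move=> hh; apply: (leq_trans _ le); lia.
have dist x y : x \in V -> y \in V ->
    nc_dist G x y = if x == y then 0%N else if f x == f y then 2%N else 1%N.
  move=> xV yV; rewrite /nc_dist -/V.
  case: eqVneq => [<-|xy]; first exact: gd0.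
  have adj u v : u \in V -> v \in V -> nc_adj V u v = (f u != f v).
    by move=> uV vV; rewrite /nc_adj uV vV commV.
  case: ifP => fxy.
    have [z zV fz] : exists2 z, z \in V & f z != f x.
      case: (f x =P ord0) => fx0.
        exists (phi (Ordinal m0, Ordinal n12)); first by rewrite phiV.
        by rewrite fphi fx0 /g /= mod0n inordS.
      exists (phi (Ordinal h1m, Ordinal n2)); first by rewrite phiV /cen /= modn_small.
      by rewrite fphi /g /= eq_sym; apply/eqP.
    move/eqP: fxy => fxy.
    apply: (@gd2 _ _ x y z) => //.
    - by rewrite adj // fxy eqxx.
    - by rewrite adj // eq_sym.
    - by rewrite adj // -fxy.
  by apply: gd1 => //; rewrite adj // fxy.
pose f' (i : 'I_#|V|) := f (enum_val i).
have Dij i j : nc_dist_matrix R G i j = (if i == j then 0 else if f' i == f' j then 2 else 1)%:R.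
  by rewrite mxE dist ?enum_valP // (inj_eq enum_val_inj).
have cardf t : #|[set i | f' i == t]| = if t == ord0 then ((h.*2 - 2) * n)%N else (2 * n)%N.
  have E1 : #|[set i | f' i == t]| = #|[set x in V | f x == t]|.
    have -> : [set x in V | f x == t] = enum_val @: [set i | f' i == t].
      apply/setP => x; rewrite inE; apply/andP/imsetP => [[xV fx]|[i]].
        by exists (enum_rank_in xV x); rewrite ?inE /f' enum_rankK_in.
      by rewrite inE => fi ->; split; [exact: enum_valP | exact fi].
    by rewrite card_imset //; exact: enum_val_inj.
  have E2 : [set x in V | f x == t] = phi @: [set p | ~~ cen p && (g p == t)].
    apply/setP => x; rewrite inE; apply/andP/imsetP => [[/Vphi [p -> cp] fx]|[p]].
      by exists p; rewrite // inE cp -fphi.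
    by rewrite inE => /andP[cp gp] ->; rewrite phiV fphi.
  rewrite E1 E2 card_imset //.
  case: ifP => [/eqP -> | t0].
    have -> : [set p | ~~ cen p && (g p == ord0)] =
        setX [set i : 'I_(h.*2) | (i %% h != 0)%N] [set j : 'I_(2 * n) | ~~ odd j].
      apply/setP => [[i j]]; rewrite !inE /cen /g /=.
      by case: (odd j) => /=; rewrite ?inordS ?ltn_pmod ?andbT ?andbF.
    by rewrite cardsX cnt_modC // cnt_even.
  have tpos : (0 < t)%N.
    by rewrite lt0n; apply: contraFneq t0 => t0'; apply/eqP/val_inj.
  have -> : [set p | ~~ cen p && (g p == t)] =
      setX [set i : 'I_(h.*2) | (i %% h == t.-1)%N] [set j : 'I_(2 * n) | odd j].
    apply/setP => [[i j]]; rewrite !inE /cen /g /=.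
    case: (odd j) => /=.
      rewrite -val_eqE /= inordK ?ltnS ?ltn_pmod //.
      by rewrite andbT; move: tpos; case: (nat_of_ord t).
    by rewrite andbF [ord0 == t]eq_sym t0 andbF.
  rewrite cardsX cnt_mod ?cnt_odd //.
  have := ltn_ord t; lia.
have sumN := @part_sum _ _ f' _ _ cardf.
have hN : (h.+1 <= #|V|)%N by rewrite sumN -muln2; move: h2 n1; clear; nia.
rewrite (@multipartite _ _ _ f' _ _ _ h0 hN cardf Dij) sumN doubleK.
have ex1 : ((h.*2 - 2) * n + h * (2 * n) - h.+1 = 2 * n * (h.*2 - 1) - h - 1)%N.
  by rewrite -!muln2; move: h2 n1; clear; nia.
rewrite ex1 -!mulrA; congr (_ * (_ * _)).
  congr (_ ^+ _).
  by rewrite rmorphB rmorphM /= !polyC_natr natrM; ring.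
have -> : (h * (2 * n) = h.*2 * n)%N by rewrite -muln2; nia.
have h2m : (2 <= h.*2)%N by rewrite -muln2; lia.
rewrite !natrD !natrM natrB //.
set M : R := (h.*2)%:R.
set nr : R := n%:R.
set d := Num.sqrt _.
have Dpos : 0 <= 5 * M ^+ 2 - 20 * M + 36.
  have -> : 5 * M ^+ 2 - 20 * M + 36 = 5 * (M - 2) ^+ 2 + 16 by ring.
  apply: addr_ge0; last by rewrite ler0n.
  by apply: mulr_ge0; [rewrite ler0n | exact: sqr_ge0].
have dd : d ^+ 2 = 5 * M ^+ 2 - 20 * M + 36 by rewrite sqr_sqrtr.
have two0 : (2 : R) != 0 by rewrite pnatr_eq0.
set c1 := (_ + _) / 2.
set c2 := (_ - _) / 2.
have key (u v : R) : ('X - u%:P) * ('X - v%:P) = 'X * 'X - (u + v)%:P * 'X + (u * v)%:P.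
  by rewrite rmorphD rmorphM /=; ring.
have s12 : c1 + c2 = 3 * M * nr - 2 * nr - 4.
  by rewrite /c1 /c2; field.
have p12 : c1 * c2 = (2 - (M - 2) * nr) * (2 - 2 * nr - ((M - 2) * nr + M * nr))
                     - ((M - 2) * nr - 2 * nr) * ((M - 2) * nr).
  have -> : c1 * c2 = ((2 * nr - 3 * M * nr + 4) ^+ 2 - nr ^+ 2 * d ^+ 2) / 4.
    by rewrite /c1 /c2; field.
  rewrite dd; field.
  done.
rewrite key s12 p12 /M /nr !(rmorphB, rmorphD, rmorphM, rmorph1) /= !polyC_natr.
ring.
Qed.
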